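(* Let $X$ be a metric space and $A\subset X$. The following are equivalent: (1) the characteristic function $\chi_A$ of $A$ is glacially oscillating; (2) $A$ is coarsely clopen; (3) there is a glacial scale $\mathcal S$ such that every $\mathcal S$-chain starting at a point of $A$ is entirely contained in $A$.
   Context: A function $g:X\to\mathbb R$ is slowly oscillating if for all $r,\epsilon>0$ there is a bounded $K\subset X$ such that $x,y\in X\setminus K$ and $d(x,y)<r$ imply $|g(x)-g(y)|<\epsilon$. A subset $A$ of a metric space $X$ is coarsely clopen if $\chi_A$ is slowly oscillating (i.e. $A$ and $X\setminus A$ are coarsely disjoint). A glacial scale on $X$ is a sequence $\mathcal S=\{(K_i,n_i)\}_{i\ge1}$ of pairs, each $K_i$ a bounded subset of $X$ and $n_i$ a natural number, such that for every bounded $K\subset X$ and every $r>0$ there is $i$ with $K\subset K_i$ and $n_i>r$. An $\mathcal S$-chain is a finite sequence $x_1,\dots,x_n$ in $X$ such that for each $i\le n-1$ there is $m\ge1$ with $x_i,x_{i+1}\notin K_m$ and $d(x_i,x_{i+1})\le n_m$. A function $f:X\to\mathbb R$ is glacially oscillating if for every $\epsilon>0$ there is a glacial scale $\mathcal S$ such that $|f(x_1)-f(x_n)|<\epsilon$ for every $\mathcal S$-chain $x_1,\dots,x_n$. *)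

(* Defs.v *)
From Stdlib Require Import Reals ClassicalEpsilon.
Open Scope R_scope.

Record MetricSpace := {
  carrier :> Type;
  dist : carrier -> carrier -> R;
  dist_eq0 : forall x y, dist x y = 0 <-> x = y;
  dist_sym : forall x y, dist x y = dist y x;
  dist_tri : forall x y z, dist x z <= dist x y + dist y z
}.

Arguments dist {_} _ _.

Definition bounded {X : MetricSpace} (K : X -> Prop) : Prop :=
  exists (x0 : X) (r : R), forall x, K x -> dist x0 x <= r.

Definition subset {X : Type} (A B : X -> Prop) : Prop := forall x, A x -> B x.

Definition chi {X : Type} (A : X -> Prop) (x : X) : R :=
  if excluded_middle_informative (A x) then 1 else 0.

Definition slowly_oscillating {X : MetricSpace} (g : X -> R) : Prop :=
  forall r eps : R, 0 < r -> 0 < eps ->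
    exists K : X -> Prop, bounded K /\
      forall x y : X, ~ K x -> ~ K y -> dist x y < r -> Rabs (g x - g y) < eps.

Definition coarsely_clopen {X : MetricSpace} (A : X -> Prop) : Prop :=
  slowly_oscillating (chi A).

(* A glacial scale S = {(K_i, n_i)}_i, indexed here by i : nat (starting at 0
   instead of 1, which is immaterial). *)
Definition glacial_scale {X : MetricSpace} (K : nat -> X -> Prop) (n : nat -> nat) : Prop :=
  (forall i, bounded (K i)) /\
  (forall (B : X -> Prop) (r : R), bounded B -> 0 < r ->
     exists i, subset B (K i) /\ r < INR (n i)).

(* An S-chain x_0, ..., x_len (a finite sequence of len+1 points). *)
Definition S_chain {X : MetricSpace} (K : nat -> X -> Prop) (n : nat -> nat)
    (x : nat -> X) (len : nat) : Prop :=
  forall i, (i < len)%nat ->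
    exists m, ~ K m (x i) /\ ~ K m (x (S i)) /\ dist (x i) (x (S i)) <= INR (n m).

Definition glacially_oscillating {X : MetricSpace} (f : X -> R) : Prop :=
  forall eps : R, 0 < eps ->
    exists (K : nat -> X -> Prop) (n : nat -> nat), glacial_scale K n /\
      forall (x : nat -> X) (len : nat), S_chain K n x len ->
        Rabs (f (x 0%nat) - f (x len)) < eps.

(* Main.v *)
Require Import Defs.
From Stdlib Require Import Reals.
From Stdlib Require Import Lra Lia ClassicalEpsilon.
Open Scope R_scope.

Lemma dist_ge0 (X : MetricSpace) (x y : X) : 0 <= Defs.dist x y.
Proof.
  pose proof (Defs.dist_tri X x y x) as H. rewrite (Defs.dist_sym X y x) in H.
  assert (Defs.dist x x = 0) by (apply Defs.dist_eq0; reflexivity). lra.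
Qed.

Lemma chi_iff {T : Type} (A : T -> Prop) x y :
  Rabs (chi A x - chi A y) < 1 -> (A x <-> A y).
Proof.
  unfold chi; destruct (excluded_middle_informative (A x)) as [a|a];
  destruct (excluded_middle_informative (A y)) as [b|b]; intro H; try tauto;
  exfalso; [replace (1-0) with 1 in H by ring; rewrite Rabs_R1 in H; lra
           | replace (0-1) with (-(1)) in H by ring; rewrite Rabs_Ropp, Rabs_R1 in H; lra].
Qed.

Lemma chi_eq {T : Type} (A : T -> Prop) x y :
  (A x <-> A y) -> chi A x = chi A y.
Proof.
  unfold chi; destruct (excluded_middle_informative (A x));
  destruct (excluded_middle_informative (A y)); tauto.
Qed.

Section P.
Variable X : MetricSpace.
Variable A : X -> Prop.

Lemma one_two : glacially_oscillating (chi A) -> coarsely_clopen A.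
Proof.
  intros H r eps Hr He.
  destruct (H eps He) as (K & n & [Kb Kg] & Hc).
  destruct (Kg (K 0%nat) r (Kb 0%nat) Hr) as (i & _ & Hi).
  exists (K i). split; [apply Kb|].
  intros x y Hx Hy Hd.
  set (s := fun k : nat => match k with O => x | _ => y end).
  apply (Hc s 1%nat).
  intros k Hk. assert (k = 0%nat) by lia. subst k. exists i. simpl.
  split; [exact Hx|]. split; [exact Hy|]. lra.
Qed.

Lemma three_one :
  (exists (K : nat -> X -> Prop) (n : nat -> nat), glacial_scale K n /\
      forall (x : nat -> X) (len : nat), S_chain K n x len -> A (x 0%nat) ->
        forall i, (i <= len)%nat -> A (x i)) -> glacially_oscillating (chi A).
Proof.
  intros (K & n & G & Hc) eps He. exists K, n. split; [exact G|].
  intros x len Hch.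
  assert (Hrev : S_chain K n (fun i => x (len - i)%nat) len).
  { intros i Hi. destruct (Hch (len - S i)%nat ltac:(lia)) as (m & h1 & h2 & h3).
    exists m.
    replace (S (len - S i)) with (len - i)%nat in * by lia.
    split; [exact h2|]. split; [exact h1|]. rewrite Defs.dist_sym. exact h3. }
  rewrite (chi_eq A (x 0%nat) (x len)).
  - replace (chi A (x len) - chi A (x len)) with 0 by ring. rewrite Rabs_R0. exact He.
  - split; intro Ha.
    + apply (Hc x len Hch Ha len). lia.
    + pose proof (Hc _ len Hrev) as Hr. simpl in Hr.
      replace (len - 0)%nat with len in Hr by lia.
      specialize (Hr Ha len (le_n _)). replace (len - len)%nat with 0%nat in Hr by lia.
      exact Hr.
Qed.

Lemma two_three : coarsely_clopen A ->
  (exists (K : nat -> X -> Prop) (n : nat -> nat), glacial_scale K n /\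
      forall (x : nat -> X) (len : nat), S_chain K n x len -> A (x 0%nat) ->
        forall i, (i <= len)%nat -> A (x i)).
Proof.
  intro H.
  assert (Hm : forall m : nat, exists K : X -> Prop, Defs.bounded K /\
     forall x y, ~ K x -> ~ K y -> Defs.dist x y <= INR m -> (A x <-> A y)).
  { intro m. assert (0 < INR m + 1) by (pose proof (pos_INR m); lra).
    destruct (H (INR m + 1) 1 H0 Rlt_0_1) as (K & Kb & HK).
    exists K. split; [exact Kb|]. intros x y Hx Hy Hd.
    apply chi_iff. apply HK; auto. lra. }
  set (Kf := fun m => proj1_sig (constructive_indefinite_description _ (Hm m))).
  assert (HKf : forall m, Defs.bounded (Kf m) /\
     forall x y, ~ Kf m x -> ~ Kf m y -> Defs.dist x y <= INR m -> (A x <-> A y)).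
  { intro m. unfold Kf. exact (proj2_sig (constructive_indefinite_description _ (Hm m))). }
  destruct (proj1 (HKf 0%nat)) as (x0 & _ & _).
  exists (fun m x => Kf m x \/ Defs.dist x0 x <= INR m), (fun m => m).
  split; [split|].
  - intro i. destruct (proj1 (HKf i)) as (y & s & Hs).
    exists x0, (Defs.dist x0 y + Rabs s + INR i). intros x [Hx|Hx].
    + specialize (Hs x Hx). pose proof (Defs.dist_tri X x0 y x).
      pose proof (Rle_abs s). pose proof (pos_INR i). lra.
    + pose proof (dist_ge0 X x0 y). pose proof (Rabs_pos s). lra.
  - intros B r (y & s & Hs) Hr.
    destruct (INR_unbounded (Rmax r (Defs.dist x0 y + s))) as (N & HN).
    pose proof (Rmax_l r (Defs.dist x0 y + s)). pose proof (Rmax_r r (Defs.dist x0 y + s)).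
    exists N. split; [|lra].
    intros x Hx. right. specialize (Hs x Hx). pose proof (Defs.dist_tri X x0 y x). lra.
  - intros x len Hch H0 i. induction i as [|i IH]; intro Hi; [exact H0|].
    destruct (Hch i ltac:(lia)) as (m & h1 & h2 & h3).
    apply (proj2 (HKf m) (x i) (x (S i))); try tauto. apply IH. lia.
Qed.

End P.

Theorem proposition3p11 (X : MetricSpace) (A : X -> Prop) :
  (glacially_oscillating (chi A) <-> coarsely_clopen A) /\
  (coarsely_clopen A <->
    exists (K : nat -> X -> Prop) (n : nat -> nat), glacial_scale K n /\
      forall (x : nat -> X) (len : nat), S_chain K n x len -> A (x 0%nat) ->
        forall i, (i <= len)%nat -> A (x i)).
Proof.
  split; split.
  - apply one_two.
  - intro H. apply three_one, two_three, H.
  - apply two_three.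
  - intro H. apply one_two, three_one, H.
Qed.
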